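(* Let $\langle A\mid\mathcal{R}\rangle$ be a finite homogeneous presentation of a monoid $M$ and let $n$ be an integer at least the maximum length of a word appearing in a relation of $\mathcal{R}$. Let $\mathcal{R}'=\{(u\ell v,urv): (\ell,r)\in\mathcal{R},\ u,v\in A^*,\ |u\ell v|=n\}$ and let $M'$ be the monoid presented by $\langle A\mid \mathcal{R}'\rangle$. Then $\langle A\mid\mathcal{R}'\rangle$ is $n$-ary homogeneous (and $n$-ary multihomogeneous if $\langle A\mid\mathcal{R}\rangle$ is multihomogeneous), and $M$ and $M'$ are Rees-ideal-commensurable: the sets $I=\{[w]\in M: |w|\geq n\}$ and $I'=\{[w]\in M': |w|\geq n\}$ are finite Rees index ideals, isomorphic via $[w]_{\mathcal{R}'}\mapsto[w]_{\mathcal{R}}$. Consequently every finitely presented (multi)homogeneous monoid is Rees-ideal-commensurable to an $n$-ary (multi)homogeneous monoid.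
   Context: A finite presentation $\langle A\mid\mathcal{R}\rangle$ is homogeneous if $|u|=|v|$ for all $(u,v)\in\mathcal{R}$; multihomogeneous if $|u|_a=|v|_a$ for every $a\in A$ and $(u,v)\in\mathcal{R}$; $n$-ary homogeneous if $|u|=|v|=n$ for all $(u,v)\in\mathcal{R}$; $n$-ary multihomogeneous if both $n$-ary homogeneous and multihomogeneous. An ideal $U$ of a semigroup $S$ has finite Rees index if $S\setminus U$ is finite; semigroups $S_1,S_2$ are Rees-ideal-commensurable if there are finite Rees index ideals $U_i\subseteq S_i$ with $U_1\cong U_2$. In a homogeneous monoid all words representing an element have the same length, so $|w|$ for $[w]$ is well defined. *)

(* Defs.v *)
From mathcomp Require Import all_boot.
From Stdlib Require Import Relations.Relation_Operators.
Set Implicit Arguments. Unset Strict Implicit. Unset Printing Implicit Defensive.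

Definition word (A : finType) := seq A.

Definition relset (A : finType) := word A -> word A -> Prop.

Definition of_seq (A : finType) (R : seq (word A * word A)) : relset A :=
  fun l r => (l, r) \in R.

Definition finite_relset (A : finType) (R : relset A) : Prop :=
  exists s : seq (word A * word A), forall l r, R l r <-> (l, r) \in s.

Inductive step (A : finType) (R : relset A) : word A -> word A -> Prop :=
  | step_intro (u v l r : word A) : R l r -> step R (u ++ l ++ v) (u ++ r ++ v).

(* the congruence generated by R: w1 and w2 represent the same element
   of the monoid <A | R>, i.e. [w1]_R = [w2]_R *)
Definition congr (A : finType) (R : relset A) : word A -> word A -> Prop :=
  clos_refl_sym_trans (word A) (step R).

Definition homogeneous (A : finType) (R : relset A) : Prop :=
  forall l r, R l r -> size l = size r.

Definition multihomogeneous (A : finType) (R : relset A) : Prop :=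
  forall l r, R l r -> forall a : A, count_mem a l = count_mem a r.

Definition nary_homogeneous (A : finType) (n : nat) (R : relset A) : Prop :=
  forall l r, R l r -> size l = n /\ size r = n.

Definition nary_multihomogeneous (A : finType) (n : nat) (R : relset A) : Prop :=
  nary_homogeneous n R /\ multihomogeneous R.

Definition nary_rels (A : finType) (n : nat) (R : relset A) : relset A :=
  fun l' r' => exists u v l r,
    [/\ R l r, l' = u ++ l ++ v, r' = u ++ r ++ v & size (u ++ l ++ v) = n].

(* [w]_R lies in I = {[w] in <A|R> : |w| >= n} *)
Definition inI (A : finType) (R : relset A) (n : nat) (w : word A) : Prop :=
  exists w', congr R w w' /\ n <= size w'.

Definition finite_rees_index_ideal (A : finType) (R : relset A) (n : nat) : Prop :=
  (forall x w y : word A, inI R n w -> inI R n (x ++ w ++ y)) /\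
  (exists s : seq (word A),
     forall w, ~ inI R n w -> exists2 w', w' \in s & congr R w w').

(* the map [w]_{R'} |-> [w]_R is an isomorphism from I' onto I
   (it is multiplicative by construction: [w1][w2] = [w1 ++ w2]) *)
Definition canonical_iso (A : finType) (R R' : relset A) (n : nat) : Prop :=
  [/\ (forall w, inI R' n w -> inI R n w),
      (forall w1 w2, inI R' n w1 -> inI R' n w2 ->
         congr R' w1 w2 -> congr R w1 w2),
      (forall w1 w2, inI R' n w1 -> inI R' n w2 ->
         congr R w1 w2 -> congr R' w1 w2) &
      (forall w, inI R n w -> exists w', inI R' n w' /\ congr R w' w)].

(* Main.v *)
Require Import Defs.
From mathcomp Require Import all_boot.
From Stdlib Require Import Relations.Relation_Operators ClassicalEpsilon.
From mathcomp Require Import zify.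
Set Implicit Arguments. Unset Strict Implicit. Unset Printing Implicit Defensive.

Fixpoint words (A : finType) (k : nat) : seq (word A) :=
  if k is k'.+1 then [seq a :: w | a <- enum A, w <- words A k'] else [:: [::]].

Lemma mem_words (A : finType) k (w : word A) : (w \in words A k) = (size w == k).
Proof.
elim: k w => [|k IH] [|a w] //=.
- by apply/negbTE/allpairsP; case=> [[b w2]] /= [_ _].
- apply/idP/idP.
  + case/allpairsP=> [[b w2]] /= [_ hw2 [ha hw]]; by move: hw2; rewrite hw IH.
  + move=> h; apply/allpairsP; exists (a, w) => /=; split=> //.
    * by rewrite mem_enum.
    * by rewrite IH.
Qed.

Lemma arith1 sx sl m k n : m <= sx -> m <= k -> k = n - sl -> sl <= n ->
  sx - (sx - m) + (sl + (k - m)) = n.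
Proof. lia. Qed.
Lemma arith2 sx sl sy m k n : m <= sx -> m <= k -> k = n - sl -> sl <= n ->
  k - m <= sy -> sy <= k - m -> sx - (sx - m) + (sl + sy) = n.
Proof. lia. Qed.

Lemma congr_ctx (A : finType) (R : relset A) x y w1 w2 :
  congr R w1 w2 -> congr R (x ++ w1 ++ y) (x ++ w2 ++ y).
Proof.
elim=> [a b [u v l r H]| a | a b _ IH | a b c _ IH1 _ IH2].
- apply: rst_step; rewrite !catA -!(catA x u) -!catA.
  have := step_intro (x ++ u) (v ++ y) H. by rewrite -!catA.
- exact: rst_refl.
- exact: rst_sym.
- exact: rst_trans IH2.
Qed.

Lemma rees_gen (A : finType) (R : relset A) n : finite_rees_index_ideal R n.
Proof.
split.
- move=> x w y [w' [hc hs]]; exists (x ++ w' ++ y); split; first exact: congr_ctx.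
  rewrite !size_cat; apply: leq_trans hs _; rewrite addnCA leq_addr //.
- exists (flatten [seq words A k | k <- iota 0 n]) => w hw.
  exists w; last exact: rst_refl.
  have hs : size w < n.
    by rewrite ltnNge; apply/negP => h; apply: hw; exists w; split=> //; apply: rst_refl.
  apply/flattenP; exists (words A (size w)); last by rewrite mem_words.
  by apply/mapP; exists (size w); rewrite // mem_iota.
Qed.

Lemma congr_size (A : finType) (R : relset A) : homogeneous R ->
  forall w1 w2, congr R w1 w2 -> size w1 = size w2.
Proof.
move=> hR w1 w2; elim=> [a b [u v l r H]| a | a b _ IH | a b c _ IH1 _ IH2] //.
- by rewrite !size_cat (hR _ _ H).
- by rewrite IH1.
Qed.

Lemma congr_incl (A : finType) (R R' : relset A) :
  (forall a b, step R' a b -> step R a b) ->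
  forall w1 w2, congr R' w1 w2 -> congr R w1 w2.
Proof.
move=> H w1 w2; elim=> [a b hs| a | a b _ IH | a b c _ IH1 _ IH2].
- exact/rst_step/H.
- exact: rst_refl.
- exact: rst_sym.
- exact: rst_trans IH2.
Qed.

Theorem proposition5p5 (A : finType) (R : seq (word A * word A)) (n : nat)
    (hR : homogeneous (of_seq R))
    (hn : forall l r, (l, r) \in R -> size l <= n /\ size r <= n) :
  let R' := nary_rels n (of_seq R) in
  [/\ finite_relset R',
      nary_homogeneous n R' &
      (multihomogeneous (of_seq R) -> nary_multihomogeneous n R')] /\
  [/\ finite_rees_index_ideal (of_seq R) n,
      finite_rees_index_ideal R' n &
      canonical_iso (of_seq R) R' n].
Proof.
move=> R'.
have nh : nary_homogeneous n R'.
  move=> l' r' [u [v [l [r [H -> -> hs]]]]]; split=> //.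
  by rewrite -hs !size_cat (hR _ _ H).
have incl : forall a b, step R' a b -> step (of_seq R) a b.
  move=> a b [x y l' r' [u [v [l [r [H -> -> _]]]]]].
  have := step_intro (x ++ u) (v ++ y) H. by rewrite -!catA.
have sz : forall w1 w2, congr R' w1 w2 -> size w1 = size w2.
  by move=> w1 w2 /(congr_incl incl); apply: congr_size.
split; split.
- exists [seq p <- [seq (a, b) | a <- words A n, b <- words A n]
           | is_left (excluded_middle_informative (R' p.1 p.2))].
  move=> l r; rewrite mem_filter /=.
  case: excluded_middle_informative => /= h; last by split.
  split=> // _; have [h1 h2] := nh _ _ h.
  by apply: allpairs_f; rewrite mem_words ?h1 ?h2.
- exact: nh.
- move=> hm; split=> //.
  move=> l' r' [u [v [l [r [H -> -> hs]]]]] a.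
  by rewrite !count_cat (hm _ _ H).
- exact: rees_gen.
- exact: rees_gen.
- have key : forall w1 w2, congr (of_seq R) w1 w2 -> n <= size w1 -> congr R' w1 w2.
    move=> w1 w2; elim=> [a b [x y l r H]| a | a b hab IH | a b c hab IH1 _ IH2] hs.
    + have [hl _] := hn _ _ H.
      set k := n - size l.
      set m := minn (size x) k.
      have hy : k - m <= size y.
        rewrite /m /minn; case: ifP => h; last by rewrite subnn.
        move: hs; rewrite !size_cat /k => hs. lia.
      rewrite -(cat_take_drop (size x - m) x) -(cat_take_drop (k - m) y).
      set x1 := take _ x; set x2 := drop _ x; set y1 := take _ y; set y2 := drop _ y.
      have E : forall z, (x1 ++ x2) ++ z ++ y1 ++ y2 = x1 ++ (x2 ++ z ++ y1) ++ y2.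
        by move=> z; rewrite -!catA.
      rewrite !E.
      apply: rst_step; apply: step_intro.
      exists x2, y1, l, r; split=> //.
      rewrite !size_cat /x2 /y1 size_drop size_take.
      have hm : m <= size x by rewrite /m geq_minl.
      have hmk : m <= k by rewrite /m geq_minr.
      have hk : k = n - size l by [].
      case: ltnP => h; [exact: (arith1 hm hmk hk hl) | exact: (arith2 hm hmk hk hl hy h)].
    + exact: rst_refl.
    + apply: rst_sym; apply: IH.
      by rewrite (congr_size hR hab).
    + apply: rst_trans (IH1 hs) (IH2 _).
      by rewrite -(congr_size hR hab).
  split.
  + move=> w [w' [hc hs]]; exists w'; split=> //; exact: congr_incl hc.
  + move=> w1 w2 _ _; exact: congr_incl.
  + move=> w1 w2 [w' [hc hs]] _ h; apply: key => //.
    by rewrite (sz _ _ hc).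
  + move=> w [w' [hc hs]]; exists w'; split; last exact: rst_sym.
    by exists w'; split=> //; apply: rst_refl.
Qed.
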